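(* For every odd integer $s\ge3$ there exists a linear $(1,2,s,2)$-AONT.
   Context: A linear $(t_i,t_o,s,q)$-AONT is given by an invertible $s\times s$ matrix $M$ over $\mathbb{F}_q$ defining the map $\mathbf{x}\mapsto\mathbf{y}=\mathbf{x}M^{-1}$ on row vectors of $\mathbb{F}_q^s$, such that for every set $I$ of $t_i$ input coordinates and every set $J$ of $s-t_o$ output coordinates, the pair $((x_i)_{i\in I},(y_j)_{j\in J})$ takes every value in $\mathbb{F}_q^{t_i+s-t_o}$ equally often as $\mathbf{x}$ ranges over $\mathbb{F}_q^s$. Equivalently, $M$ is invertible and every $t_o\times t_i$ submatrix of $M$ has rank $t_i$. *)

(* Defs.v *)
From mathcomp Require Import all_boot all_order all_algebra all_field.
Set Implicit Arguments. Unset Strict Implicit. Unset Printing Implicit Defensive.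
Import GRing.Theory.
Local Open Scope ring_scope.

Definition submx_set (F : fieldType) (s : nat) (M : 'M[F]_s)
  (R C : {set 'I_s}) : 'M[F]_(#|R|, #|C|) :=
  \matrix_(i < #|R|, j < #|C|) M (enum_val i) (enum_val j).

(* Linear (t_i, t_o, s, q)-AONT given by the matrix M over F (with |F| = q):
   M is invertible and every t_o x t_i submatrix of M has rank t_i. *)
Definition linear_AONT (F : fieldType) (ti to s : nat) (M : 'M[F]_s) : Prop :=
  M \in unitmx /\
  forall (R C : {set 'I_s}), #|R| = to -> #|C| = ti ->
    \rank (submx_set M R C) = ti.

(* Main.v *)
Require Import Defs.
From mathcomp Require Import all_boot all_order all_algebra all_field.
Set Implicit Arguments. Unset Strict Implicit. Unset Printing Implicit Defensive.
Import GRing.Theory.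
Local Open Scope ring_scope.

Section Aux.
Variables (F : fieldType) (n : nat).

Definition Mx : 'M[F]_n.+1 :=
  \matrix_(i, j) (if (i == j) && (j != ord0) then 0 else 1).

Lemma Mx_ker (x : 'rV[F]_n.+1) : x *m Mx = 0 -> x = 0.
Proof.
move=> H.
have Hj : forall j, (x *m Mx) 0 j = 0 by move=> j; rewrite H mxE.
have Hs : forall j, (x *m Mx) 0 j =
   x 0 j * (if j != ord0 then 0 else 1) + \sum_(i | i != j) x 0 i.
  move=> j; rewrite !mxE (bigD1 j) //= !mxE eqxx /=; congr (_ + _).
  by apply: eq_bigr => i Hi; rewrite mxE (negbTE Hi) /= mulr1.
have Hz : forall j, j != ord0 -> \sum_(i | i != j) x 0 i = 0.
  by move=> j Hne; have := Hj j; rewrite Hs Hne mulr0 add0r.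
have Htot : \sum_i x 0 i = 0.
  have := Hj ord0; rewrite Hs (_ : (ord0 != ord0 :> 'I_n.+1) = false) ?eqxx // mulr1 => E.
  by rewrite (bigD1 ord0) //=.
have Hx : forall j, j != ord0 -> x 0 j = 0.
  by move=> j Hne; have := Htot; rewrite (bigD1 j) //= Hz // addr0.
apply/rowP => j; rewrite mxE.
case: (eqVneq j ord0) => [->|Hne]; last exact: Hx.
have := Htot; rewrite (bigD1 ord0) //= big1 ?addr0 //.
Qed.

Lemma Mx_unit : Mx \in unitmx.
Proof.
rewrite -row_free_unit -kermx_eq0; apply/eqP/row_matrixP => i.
rewrite row0; apply: Mx_ker; apply/sub_kermxP; exact: row_sub.
Qed.

End Aux.

Theorem mainTheorem11 :
  forall s : nat, odd s -> (3 <= s)%N ->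
    exists M : 'M['F_2]_s, linear_AONT 1 2 M.
Proof.
move=> [|n] // _ _; exists (Mx _ n); split; first exact: Mx_unit.
move=> R C HR HC; apply/eqP; rewrite eqn_leq; apply/andP; split.
  by rewrite -HC rank_leq_col.
rewrite lt0n mxrank_eq0; apply/negP => /eqP H0.
have h0 : (0 < #|R|)%N by rewrite HR.
have h1 : (1 < #|R|)%N by rewrite HR.
have hc : (0 < #|C|)%N by rewrite HC.
pose i0 := Ordinal h0; pose i1 := Ordinal h1; pose c := Ordinal hc.
have Hne : enum_val i0 != enum_val i1.
  by apply/negP => /eqP /enum_val_inj /(congr1 val).
move/matrixP: H0 => H0.
have E0 := H0 i0 c. have E1 := H0 i1 c.
rewrite /= /submx_set !mxE in E0 E1.
move: E0 E1; case: (eqVneq (enum_val i0) (enum_val c)) => [e0|_] /=;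
  last by move/eqP; rewrite oner_eq0.
case: (eqVneq (enum_val i1) (enum_val c)) => [e1|_] /=;
  last by move=> _ /eqP; rewrite oner_eq0.
by move: Hne; rewrite e0 e1 eqxx.
Qed.
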